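(* Let $\mathcal M$ be a rank 3 acyclic oriented matroid with chirotope $\chi:E^3\to\{-1,0,1\}$ on $E=X\sqcup\{\omega\}$, where $\omega$ is not a coloop and is neither parallel nor antiparallel to any other element. Suppose there are distinct positive cocircuits $A,B$ of $\mathcal M$, neither containing $\omega$, such that $\chi(\omega,a,b)=1$ for all $a\in A\setminus B$ and $b\in B\setminus A$. Suppose $\mathcal M$ has a realization, i.e. vectors $\mathbf v_e=(x_e,y_e,z_e)^T\in\mathbb{R}^3$, $e\in E$, with $\chi(e,f,g)=\operatorname{sign}\det(\mathbf v_e,\mathbf v_f,\mathbf v_g)$ for all $e,f,g\in E$. Then a realization $(\mathbf v_e)_{e\in E}$ of $\mathcal M$ can be chosen such that: (1) $\mathbf v_\omega=(0,0,1)^T$; (2) $x_a^2+y_a^2=1$ for all $a\in X$; (3)–(5) there are $\theta_a\in(0,180)$ (degrees) with $x_a=-\cos\theta_a$ and $y_a=-\sin\theta_a$ for each $a\in X$; (6) $z_a>0$ for each $a\in X$; (7) putting $r_a=z_a>0$, for all $a,b,c\in X$ with $\theta_a<\theta_b<\theta_c$ one has $r_a\sin(\theta_c-\theta_b)-r_b\sin(\theta_c-\theta_a)+r_c\sin(\theta_b-\theta_a)=0$, $>0$, or $<0$ according as $\chi(a,b,c)$ is $0$, $1$, or $-1$; (8) $(r_a,\theta_a)_{a\in X}$ are polar coordinates for the realization, i.e. the line with homogeneous coordinates $\mathbf v_a$ is $\{(p,q):p\cos\theta_a+q\sin\theta_a=r_a\}$.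
   Context: Standard oriented matroid terminology (chirotope, acyclic, cocircuit, coloop, parallel elements, realization) is used. Angles are in degrees. *)

(* Defs.v *)
From Stdlib Require Import Reals ZArith.
From mathcomp Require Import ssreflect ssrbool eqtype fintype.

Set Implicit Arguments.
Unset Strict Implicit.

Record vec3 := V3 { vx : R; vy : R; vz : R }.

Definition det3 (u v w : vec3) : R :=
  (vx u * (vy v * vz w - vz v * vy w)
 - vx v * (vy u * vz w - vz u * vy w)
 + vx w * (vy u * vz v - vz u * vy v))%R.

Definition sgnR (x : R) : Z :=
  match Rlt_dec 0 x with
  | left _ => 1%Z
  | right _ => match Rlt_dec x 0 with left _ => (-1)%Z | right _ => 0%Z end
  end.

Definition deg (t : R) : R := (t * PI / 180)%R.

Section OM.
Variable E : Type.
Variable chi : E -> E -> E -> Z.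

Definition realizes (v : E -> vec3) : Prop :=
  forall e f g, chi e f g = sgnR (det3 (v e) (v f) (v g)).

Definition is_sign_vector (X : E -> Z) : Prop :=
  forall e, X e = 0%Z \/ X e = 1%Z \/ X e = (-1)%Z.

(* Cocircuits of a rank-3 oriented matroid given by its chirotope:
   C = s * chi(., f, g) for s = +-1 and f, g such that chi(., f, g) <> 0. *)
Definition cocircuit (C : E -> Z) : Prop :=
  exists f g s, (s = 1%Z \/ s = (-1)%Z) /\ (exists e, chi e f g <> 0%Z) /\
    forall e, C e = (s * chi e f g)%Z.

Definition pos_cocircuit (C : E -> Z) : Prop :=
  cocircuit C /\ forall e, (0 <= C e)%Z.

Definition orth (X Y : E -> Z) : Prop :=
  (forall e, (X e * Y e)%Z = 0%Z) \/
  ((exists e, (X e * Y e > 0)%Z) /\ (exists f, (X f * Y f < 0)%Z)).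

(* vectors of the oriented matroid = sign vectors orthogonal to all cocircuits;
   circuits = nonzero vectors of minimal support *)
Definition om_vector (X : E -> Z) : Prop :=
  is_sign_vector X /\ forall D, cocircuit D -> orth X D.

Definition circuit (C : E -> Z) : Prop :=
  om_vector C /\ (exists e, C e <> 0%Z) /\
  forall D, om_vector D -> (exists e, D e <> 0%Z) ->
    (forall e, D e <> 0%Z -> C e <> 0%Z) -> (forall e, C e <> 0%Z -> D e <> 0%Z).

Definition acyclic : Prop :=
  ~ exists C, circuit C /\ forall e, (0 <= C e)%Z.

(* bases = triples with chi <> 0; a coloop lies in every basis *)
Definition coloop (w : E) : Prop :=
  forall a b c, chi a b c <> 0%Z -> w = a \/ w = b \/ w = c.

Definition parallel (e f : E) : Prop :=
  e <> f /\ exists C, circuit C /\ C e = 1%Z /\ C f = (-1)%Z /\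
    forall g, g <> e -> g <> f -> C g = 0%Z.

Definition antiparallel (e f : E) : Prop :=
  e <> f /\ exists C, circuit C /\ C e = 1%Z /\ C f = 1%Z /\
    forall g, g <> e -> g <> f -> C g = 0%Z.

End OM.

(* the line {(p,q) : x p + y q + z = 0} with homogeneous coordinates (x,y,z) *)
Definition on_line (v : vec3) (p q : R) : Prop :=
  (vx v * p + vy v * q + vz v = 0)%R.

(* Main.v *)
Require Import Defs.
From Stdlib Require Import Reals ZArith Lra Lia Psatz FunctionalExtensionality IndefiniteDescription.
From mathcomp Require Import ssreflect ssrbool eqtype fintype seq.
Open Scope R_scope.

Definition dot (u v : vec3) : R := vx u * vx v + vy u * vy v + vz u * vz v.
Definition cross (u v : vec3) : vec3 :=
  V3 (vy u * vz v - vz u * vy v) (vz u * vx v - vx u * vz v) (vx u * vy v - vy u * vx v).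
Definition scal (k : R) (u : vec3) : vec3 := V3 (k * vx u) (k * vy u) (k * vz u).
Definition addv (u v : vec3) : vec3 := V3 (vx u + vx v) (vy u + vy v) (vz u + vz v).

Lemma det3_dot p q r : det3 p q r = dot p (cross q r).
Proof. destruct p, q, r; unfold det3, dot, cross; simpl; ring. Qed.

Lemma dot_sym u v : dot u v = dot v u.
Proof. unfold dot; ring. Qed.

Lemma sgnR_pos x : 0 < x -> sgnR x = 1%Z.
Proof. intro H; unfold sgnR; destruct (Rlt_dec 0 x); [reflexivity| lra]. Qed.
Lemma sgnR_neg x : x < 0 -> sgnR x = (-1)%Z.
Proof. intro H; unfold sgnR; destruct (Rlt_dec 0 x); [lra|]; destruct (Rlt_dec x 0); [reflexivity|lra]. Qed.
Lemma sgnR_0 x : x = 0 -> sgnR x = 0%Z.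
Proof. intro H; unfold sgnR; destruct (Rlt_dec 0 x); [lra|]; destruct (Rlt_dec x 0); [lra|reflexivity]. Qed.

Lemma sgnR_cases x : (0 < x /\ sgnR x = 1%Z) \/ (x = 0 /\ sgnR x = 0%Z) \/ (x < 0 /\ sgnR x = (-1)%Z).
Proof.
  destruct (Rtotal_order x 0) as [H|[H|H]].
  - right; right; split; [exact H| apply sgnR_neg; exact H].
  - right; left; split; [exact H| apply sgnR_0; exact H].
  - left; split; [exact H| apply sgnR_pos; exact H].
Qed.

Lemma sgnR_eq0 x : sgnR x = 0%Z -> x = 0.
Proof. destruct (sgnR_cases x) as [[? ->]|[[? ->]|[? ->]]]; intros; try discriminate; auto. Qed.
Lemma sgnR_eq1 x : sgnR x = 1%Z -> 0 < x.
Proof. destruct (sgnR_cases x) as [[? ->]|[[? ->]|[? ->]]]; intros; try discriminate; auto. Qed.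
Lemma sgnR_eqm1 x : sgnR x = (-1)%Z -> x < 0.
Proof. destruct (sgnR_cases x) as [[? ->]|[[? ->]|[? ->]]]; intros; try discriminate; auto. Qed.
Lemma sgnR_ge0 x : (0 <= sgnR x)%Z -> 0 <= x.
Proof. destruct (sgnR_cases x) as [[? ->]|[[? ->]|[? ->]]]; intros; try lia; lra. Qed.

Lemma sgnR_opp x : sgnR (- x) = (- sgnR x)%Z.
Proof.
  destruct (sgnR_cases x) as [[H ->]|[[H ->]|[H ->]]].
  - apply sgnR_neg; lra.
  - apply sgnR_0; lra.
  - apply sgnR_pos; lra.
Qed.

Lemma sgnR_scale k x : 0 < k -> sgnR (k * x) = sgnR x.
Proof.
  intro Hk; destruct (sgnR_cases x) as [[H ->]|[[H ->]|[H ->]]].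
  - apply sgnR_pos; nra.
  - apply sgnR_0; subst; ring.
  - apply sgnR_neg; nra.
Qed.


Lemma cocirc_rep (E : Type) (chi : E -> E -> E -> Z) (v : E -> vec3) D :
  realizes chi v -> cocircuit chi D ->
  exists c, (forall e, D e = sgnR (dot c (v e))) /\ (exists e, D e <> 0%Z).
Proof.
  intros Hr [f [g [s [Hs [[e0 He0] HD]]]]].
  destruct Hs as [-> | ->].
  - exists (cross (v f) (v g)); split.
    + intro e; rewrite HD Hr det3_dot dot_sym; lia.
    + exists e0; rewrite HD; lia.
  - exists (scal (-1) (cross (v f) (v g))); split.
    + intro e; rewrite HD Hr det3_dot.
      replace (dot (scal (-1) (cross (v f) (v g))) (v e)) with (- dot (v e) (cross (v f) (v g))).
      * rewrite sgnR_opp; lia.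
      * destruct (v e), (v f), (v g); unfold dot, scal, cross; simpl; ring.
    + exists e0; rewrite HD; lia.
Qed.

Arguments cocirc_rep {E chi v D}.
Definition nz (u : vec3) := 0 < dot u u.

Lemma nz_dec u : nz u \/ u = V3 0 0 0.
Proof.
  destruct u as [a b c]; unfold nz, dot; simpl.
  destruct (Req_dec a 0), (Req_dec b 0), (Req_dec c 0); subst;
    try (right; reflexivity); left; nra.
Qed.

Lemma no_loop (E : eqType) (chi : E -> E -> E -> Z) (v : E -> vec3) e :
  realizes chi v -> acyclic chi -> nz (v e).
Proof.
  intros Hr Hac.
  destruct (nz_dec (v e)) as [H|H]; [exact H|exfalso].
  apply Hac.
  exists (fun x => if x == e then 1%Z else 0%Z); split; [split; [split|split]|].
  - intro x; destruct (x == e); lia.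
  - intros D HD; destruct (cocirc_rep Hr HD) as [c [Hc _]]; left; intro x.
    destruct (eqVneq x e) as [->|Hne]; [|lia].
    rewrite Hc H; unfold dot; simpl.
    replace (vx c * 0 + vy c * 0 + vz c * 0) with 0 by ring.
    rewrite sgnR_0; [lia|reflexivity].
  - exists e; rewrite eqxx; lia.
  - intros D _ [x Hx] Hsub y; destruct (eqVneq y e) as [->|Hne]; [|lia].
    intros _; destruct (eqVneq x e) as [->|Hne2]; [exact Hx|].
    exfalso; apply (Hsub x Hx); rewrite (negbTE Hne2); reflexivity.
  - intro x; destruct (x == e); lia.
Qed.


Lemma cramer (e p q r : vec3) :
  det3 p q r * vx e = det3 e q r * vx p + det3 e r p * vx q + det3 e p q * vx r /\
  det3 p q r * vy e = det3 e q r * vy p + det3 e r p * vy q + det3 e p q * vy r /\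
  det3 p q r * vz e = det3 e q r * vz p + det3 e r p * vz q + det3 e p q * vz r.
Proof. destruct e, p, q, r; unfold det3; simpl; repeat split; ring. Qed.

Lemma nz_cocirc (E : Type) (chi : E -> E -> E -> Z) (v : E -> vec3) e :
  realizes chi v -> (exists a b c, chi a b c <> 0%Z) -> nz (v e) ->
  exists f g, chi e f g <> 0%Z.
Proof.
  intros Hr [p [q [r Hpqr]]] Hn.
  rewrite Hr in Hpqr.
  assert (Hd : det3 (v p) (v q) (v r) <> 0).
  { intro H0; apply Hpqr; apply sgnR_0; exact H0. }
  destruct (Req_dec (det3 (v e) (v q) (v r)) 0) as [H1|H1];
  [destruct (Req_dec (det3 (v e) (v r) (v p)) 0) as [H2|H2];
   [destruct (Req_dec (det3 (v e) (v p) (v q)) 0) as [H3|H3]|]|].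
  - exfalso. unfold nz in Hn.
    destruct (cramer (v e) (v p) (v q) (v r)) as [Ea [Eb Ec]].
    rewrite H1 H2 H3 in Ea Eb Ec.
    assert (vx (v e) = 0) by (apply (Rmult_eq_reg_l (det3 (v p) (v q) (v r))); lra).
    assert (vy (v e) = 0) by (apply (Rmult_eq_reg_l (det3 (v p) (v q) (v r))); lra).
    assert (vz (v e) = 0) by (apply (Rmult_eq_reg_l (det3 (v p) (v q) (v r))); lra).
    unfold dot in Hn; rewrite H H0 H4 in Hn; lra.
  - exists p, q; rewrite Hr; intro H; apply H3; apply sgnR_eq0; exact H.
  - exists r, p; rewrite Hr; intro H; apply H2; apply sgnR_eq0; exact H.
  - exists q, r; rewrite Hr; intro H; apply H1; apply sgnR_eq0; exact H.
Qed.


Arguments nz_cocirc {E chi v e}.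
Arguments no_loop {E chi v e}.

Lemma single_supp (E : Type) (chi : E -> E -> E -> Z) D x :
  om_vector chi D -> (forall y, D y <> 0%Z -> y = x) -> D x <> 0%Z ->
  (exists f g, chi x f g <> 0%Z) -> False.
Proof.
  intros [_ HD] Hs Hx [f [g Hfg]].
  assert (Hc : cocircuit chi (fun e => chi e f g)).
  { exists f, g, 1%Z; split; [left; reflexivity|split].
    - exists x; exact Hfg.
    - intro e; lia. }
  destruct (HD _ Hc) as [H|[[e He] [e' He']]].
  - specialize (H x); simpl in H; nia.
  - simpl in He, He'.
    assert (D e <> 0%Z) by (intro Z0; rewrite Z0 in He; lia).
    assert (D e' <> 0%Z) by (intro Z0; rewrite Z0 in He'; lia).
    rewrite (Hs e H) in He; rewrite (Hs e' H0) in He'; lia.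
Qed.

Lemma two_circuit (E : eqType) (chi : E -> E -> E -> Z) (v : E -> vec3) w a (sg : Z) :
  realizes chi v -> w <> a -> (sg = 1 \/ sg = -1)%Z ->
  (forall c, sgnR (dot c (v a)) = (- sg * sgnR (dot c (v w)))%Z) ->
  (exists f g, chi w f g <> 0%Z) -> (exists f g, chi a f g <> 0%Z) ->
  circuit chi (fun x => if x == w then 1%Z else if x == a then sg else 0%Z).
Proof.
  intros Hr Hwa Hsg Hrel Hcw Hca.
  assert (Haw : (a == w) = false) by (apply/eqP; intro H; apply Hwa; symmetry; exact H).
  split; [split|split].
  - intro x; destruct (x == w); [lia|destruct (x == a); lia].
  - intros D HD; destruct (cocirc_rep Hr HD) as [c [Hc _]].
    destruct (sgnR_cases (dot c (v w))) as [[_ Hs]|[[_ Hs]|[_ Hs]]].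
    + right; split.
      * exists w; rewrite eqxx Hc Hs; lia.
      * exists a; rewrite Haw eqxx Hc Hrel Hs; destruct Hsg as [-> | ->]; lia.
    + left; intro x; destruct (eqVneq x w) as [->|Hne1].
      * rewrite Hc Hs; lia.
      * try rewrite (negbTE Hne1); destruct (eqVneq x a) as [->|Hne2].
        -- rewrite Hc Hrel Hs; lia.
        -- lia.
    + right; split.
      * exists a; rewrite Haw eqxx Hc Hrel Hs; destruct Hsg as [-> | ->]; lia.
      * exists w; rewrite eqxx Hc Hs; lia.
  - exists w; rewrite eqxx; lia.
  - intros D HD [x Hx] Hsub y Hy.
    assert (Hsupp : forall z, D z <> 0%Z -> z = w \/ z = a).
    { intros z Hz; specialize (Hsub z Hz).
      destruct (eqVneq z w) as [E1|Hne1]; [left; exact E1|].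
      try rewrite (negbTE Hne1) in Hsub; destruct (eqVneq z a) as [E2|Hne2]; [right; exact E2|].
      exfalso; apply Hsub; reflexivity. }
    assert (Hyy : y = w \/ y = a).
    { destruct (eqVneq y w) as [E1|Hne1]; [left; exact E1|].
      try rewrite (negbTE Hne1) in Hy; destruct (eqVneq y a) as [E2|Hne2]; [right; exact E2|].
      exfalso; apply Hy; reflexivity. }
    assert (Hw : D w <> 0%Z).
    { intro Hw0. apply (@single_supp _ chi D a HD).
      - intros z Hz; destruct (Hsupp z Hz) as [E1|E1]; [subst z; contradiction|exact E1].
      - destruct (Hsupp x Hx) as [E1|E1]; subst x; [contradiction|exact Hx].
      - exact Hca. }
    assert (Ha : D a <> 0%Z).
    { intro Ha0. apply (@single_supp _ chi D w HD).
      - intros z Hz; destruct (Hsupp z Hz) as [E1|E1]; [exact E1|subst z; contradiction].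
      - destruct (Hsupp x Hx) as [E1|E1]; subst x; [exact Hx|contradiction].
      - exact Hcw. }
    destruct Hyy as [E1|E1]; subst y; assumption.
Qed.

Lemma dot_scal c k u : dot c (scal k u) = k * dot c u.
Proof. unfold dot, scal; simpl; ring. Qed.

Lemma sgn_rel al be x y : be <> 0 -> be * y = al * x -> (be*be) * y = (al*be) * x /\ 0 < be*be.
Proof. intros Hb H. split. replace (be*be*y) with (be*(be*y)) by ring. rewrite H; ring.
  destruct (Rtotal_order be 0) as [h|[h|h]]; nra. Qed.
Lemma sgn_pos_rel al be x y : be <> 0 -> 0 < al*be -> be * y = al * x -> sgnR y = sgnR x.
Proof. intros Hb Hp H; destruct (sgn_rel _ _ _ _ Hb H) as [E Hbb].
  destruct (sgnR_cases x) as [[H1 ->]|[[H1 ->]|[H1 ->]]].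
  - apply sgnR_pos. assert (0 < be*be*y) by (rewrite E; nra). nra.
  - apply sgnR_0. subst x. apply (Rmult_eq_reg_l (be*be)); lra.
  - apply sgnR_neg. assert (be*be*y < 0) by (rewrite E; nra). nra.
Qed.
Lemma sgn_neg_rel al be x y : be <> 0 -> al*be < 0 -> be * y = al * x -> sgnR y = (- sgnR x)%Z.
Proof. intros Hb Hp H; destruct (sgn_rel _ _ _ _ Hb H) as [E Hbb].
  destruct (sgnR_cases x) as [[H1 ->]|[[H1 ->]|[H1 ->]]].
  - apply sgnR_neg. assert (be*be*y < 0) by (rewrite E; nra). nra.
  - apply sgnR_0. subst x. apply (Rmult_eq_reg_l (be*be)); lra.
  - apply sgnR_pos. assert (0 < be*be*y) by (rewrite E; nra). nra.
Qed.

Lemma par_or_anti (E : eqType) (chi : E -> E -> E -> Z) (v : E -> vec3) w a (al be : R) :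
  realizes chi v -> (exists p q r, chi p q r <> 0%Z) -> acyclic chi -> w <> a ->
  al <> 0 -> be <> 0 -> scal al (v w) = scal be (v a) ->
  parallel chi w a \/ antiparallel chi w a.
Proof.
  intros Hr Hrk Hac Hwa Hal Hbe Heq.
  have Hcw := nz_cocirc Hr Hrk (no_loop (e:=w) Hr Hac).
  have Hca := nz_cocirc Hr Hrk (no_loop (e:=a) Hr Hac).
  assert (Hd : forall c, be * dot c (v a) = al * dot c (v w)).
  { intro c; rewrite -!dot_scal Heq; reflexivity. }
  assert (Haw : (a == w) = false) by (apply/eqP; intro H; apply Hwa; symmetry; exact H).
  destruct (Rlt_dec 0 (al * be)) as [Hp|Hn].
  - left; split; [exact Hwa|].
    exists (fun x => if x == w then 1%Z else if x == a then (-1)%Z else 0%Z); split.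
    + apply (@two_circuit E chi v); auto.
      intro c; specialize (Hd c).
      rewrite (sgn_pos_rel _ _ _ _ Hbe Hp Hd); lia.
    + rewrite eqxx Haw eqxx; repeat split.
      intros g H1 H2; rewrite (introF eqP H1) (introF eqP H2); reflexivity.
  - right; split; [exact Hwa|].
    exists (fun x => if x == w then 1%Z else if x == a then 1%Z else 0%Z); split.
    + apply (@two_circuit E chi v); auto.
      intro c; specialize (Hd c).
      assert (al * be < 0) by (destruct (Rtotal_order (al*be) 0) as [h|[h|h]]; [exact h| exfalso; apply Rmult_integral in h; tauto | lra]).
      rewrite (sgn_neg_rel _ _ _ _ Hbe H Hd); lia.
    + rewrite eqxx Haw eqxx; repeat split.
      intros g H1 H2; rewrite (introF eqP H1) (introF eqP H2); reflexivity.
Qed.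


Lemma zero_dot u c : u = V3 0 0 0 -> dot c u = 0.
Proof. intros ->; unfold dot; simpl; ring. Qed.

Lemma indep (E : Type) (v : E -> vec3) (A B : E -> Z) cA cB :
  (forall e, A e = sgnR (dot cA (v e))) -> (forall e, B e = sgnR (dot cB (v e))) ->
  (exists e, A e <> 0%Z) -> (exists e, B e <> 0%Z) ->
  (forall e, (0 <= A e)%Z) -> (forall e, (0 <= B e)%Z) -> A <> B ->
  nz (cross cA cB).
Proof.
  intros HA HB [e0 He0] [e1 He1] HA0 HB0 HAB.
  destruct (nz_dec (cross cA cB)) as [H|H]; [exact H|exfalso].
  assert (Hid : forall u, dot cA cA * dot cB u = dot cA cB * dot cA u).
  { intro u. assert (dot cA cA * dot cB u - dot cA cB * dot cA u = dot u (cross (cross cA cB) cA)).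
    { destruct cA, cB, u; unfold dot, cross; simpl; ring. }
    rewrite H in H0.
    assert (dot u (cross (V3 0 0 0) cA) = 0) by (unfold dot, cross; simpl; ring). lra. }
  assert (Hk : 0 < dot cA cA).
  { destruct (nz_dec cA) as [h|h]; [exact h|].
    exfalso; apply He0; rewrite HA dot_sym (zero_dot _ _ h); apply sgnR_0; reflexivity. }
  assert (Hx : forall e, 0 <= dot cA (v e)) by (intro e; apply sgnR_ge0; rewrite -HA; apply HA0).
  assert (Hy : forall e, 0 <= dot cB (v e)) by (intro e; apply sgnR_ge0; rewrite -HB; apply HB0).
  assert (Hy1 : 0 < dot cB (v e1)).
  { destruct (Hy e1) as [h|h]; [exact h|]. exfalso; apply He1; rewrite HB -h; apply sgnR_0; reflexivity. }
  assert (Hm : 0 < dot cA cB).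
  { destruct (Rlt_dec 0 (dot cA cB)) as [h|h]; [exact h|].
    specialize (Hid (v e1)); specialize (Hx e1). nra. }
  apply HAB; apply functional_extensionality; intro e.
  rewrite HA HB; symmetry.
  apply (sgn_pos_rel (dot cA cB) (dot cA cA)); [lra|nra|apply Hid].
Qed.

Lemma perp_par cA cB u :
  dot cA u = 0 -> dot cB u = 0 ->
  scal (dot (cross cA cB) (cross cA cB)) u = scal (dot u (cross cA cB)) (cross cA cB).
Proof.
  intros H1 H2.
  assert (E : forall i : vec3 -> R, (i = vx \/ i = vy \/ i = vz) ->
     dot (cross cA cB) (cross cA cB) * i u - dot u (cross cA cB) * i (cross cA cB)
     = i (cross (cross cA cB) cA) * dot cB u - i (cross (cross cA cB) cB) * dot cA u).
  { intros i Hi; destruct Hi as [Hi|[Hi|Hi]]; subst i; destruct cA, cB, u; unfold dot, cross; simpl; ring. }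
  rewrite H1 H2 in E.
  unfold scal; f_equal.
  - specialize (E vx (or_introl (@Logic.eq_refl _ _))); lra.
  - specialize (E vy (or_intror (or_introl (@Logic.eq_refl _ _)))); lra.
  - specialize (E vz (or_intror (or_intror (@Logic.eq_refl _ _)))); lra.
Qed.


Lemma scal_comp k u l w : scal k u = scal l w ->
  k * vx u = l * vx w /\ k * vy u = l * vy w /\ k * vz u = l * vz w.
Proof. intro H; unfold scal in H; injection H; intros; repeat split; assumption. Qed.

Lemma nz_scal_zero N u : 0 < N -> nz u -> scal N u <> scal 0 u.
Proof.
  intros HN Hu H; apply scal_comp in H; destruct H as [h1 [h2 h3]].
  unfold nz, dot in Hu.
  assert (vx u = 0) by (apply (Rmult_eq_reg_l N); lra).
  assert (vy u = 0) by (apply (Rmult_eq_reg_l N); lra).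
  assert (vz u = 0) by (apply (Rmult_eq_reg_l N); lra).
  rewrite H H0 H1 in Hu; lra.
Qed.

Lemma c1_pos (X : finType) (chi : option X -> option X -> option X -> Z) v (A B : option X -> Z) :
  realizes chi v -> (exists a b c, chi a b c <> 0%Z) -> acyclic chi ->
  (forall f, f <> None -> ~ parallel chi None f /\ ~ antiparallel chi None f) ->
  pos_cocircuit chi A -> pos_cocircuit chi B -> A <> B -> A None = 0%Z -> B None = 0%Z ->
  exists c1, dot c1 (v None) = 0 /\ forall a, 0 < dot c1 (v (Some a)).
Proof.
  intros Hr Hrk Hac Hpar [HAc HA0] [HBc HB0] HAB HAw HBw.
  destruct (cocirc_rep Hr HAc) as [cA [HA HAn]].
  destruct (cocirc_rep Hr HBc) as [cB [HB HBn]].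
  have Hn := indep _ v A B cA cB HA HB HAn HBn HA0 HB0 HAB.
  assert (Hx : forall e, 0 <= dot cA (v e)) by (intro e; apply sgnR_ge0; rewrite -HA; apply HA0).
  assert (Hy : forall e, 0 <= dot cB (v e)) by (intro e; apply sgnR_ge0; rewrite -HB; apply HB0).
  assert (HAw' : dot cA (v None) = 0) by (apply sgnR_eq0; rewrite -HA; exact HAw).
  assert (HBw' : dot cB (v None) = 0) by (apply sgnR_eq0; rewrite -HB; exact HBw).
  exists (addv cA cB); split.
  - replace (dot (addv cA cB) (v None)) with (dot cA (v None) + dot cB (v None))
      by (unfold dot, addv; simpl; ring). lra.
  - intro a.
    replace (dot (addv cA cB) (v (Some a))) with (dot cA (v (Some a)) + dot cB (v (Some a)))
      by (unfold dot, addv; simpl; ring).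
    destruct (Rlt_dec 0 (dot cA (v (Some a)) + dot cB (v (Some a)))) as [h|h]; [exact h|exfalso].
    assert (h1 : dot cA (v (Some a)) = 0) by (specialize (Hx (Some a)); specialize (Hy (Some a)); lra).
    assert (h2 : dot cB (v (Some a)) = 0) by (specialize (Hx (Some a)); specialize (Hy (Some a)); lra).
    set (n := cross cA cB) in *.
    have Pw := perp_par cA cB (v None) HAw' HBw'.
    have Pa := perp_par cA cB (v (Some a)) h1 h2.
    fold n in Pw, Pa.
    set (N := dot n n) in *.
    set (al := dot (v None) n) in *.
    set (be := dot (v (Some a)) n) in *.
    have nzw := no_loop (e:=None) Hr Hac.
    have nza := no_loop (e:=Some a) Hr Hac.
    assert (Hal : al <> 0).
    { intro h0; rewrite h0 in Pw; apply (nz_scal_zero N (v None) Hn nzw).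
      rewrite Pw; unfold scal; f_equal; ring. }
    assert (Hbe : be <> 0).
    { intro h0; rewrite h0 in Pa; apply (nz_scal_zero N (v (Some a)) Hn nza).
      rewrite Pa; unfold scal; f_equal; ring. }
    assert (Heq : scal (be * N) (v None) = scal (al * N) (v (Some a))).
    { apply scal_comp in Pw; apply scal_comp in Pa.
      destruct Pw as [w1 [w2 w3]], Pa as [a1 [a2 a3]].
      unfold scal; f_equal.
      - replace (be * N * vx (v None)) with (be * (N * vx (v None))) by ring. rewrite w1. replace (al * N * vx (v (Some a))) with (al * (N * vx (v (Some a)))) by ring. rewrite a1. ring.
      - replace (be * N * vy (v None)) with (be * (N * vy (v None))) by ring. rewrite w2. replace (al * N * vy (v (Some a))) with (al * (N * vy (v (Some a)))) by ring. rewrite a2. ring.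
      - replace (be * N * vz (v None)) with (be * (N * vz (v None))) by ring. rewrite w3. replace (al * N * vz (v (Some a))) with (al * (N * vz (v (Some a)))) by ring. rewrite a3. ring. }
    assert (HbN : be * N <> 0) by (intro z; apply Rmult_integral in z; unfold nz in Hn; fold N in Hn; destruct z; lra).
    assert (HaN : al * N <> 0) by (intro z; apply Rmult_integral in z; unfold nz in Hn; fold N in Hn; destruct z; lra).
    destruct (@par_or_anti _ chi v None (Some a) _ _ Hr Hrk Hac ltac:(discriminate) HbN HaN Heq) as [P|P];
      destruct (Hpar (Some a) ltac:(discriminate)); contradiction.
Qed.


Lemma angle x y : x ^ 2 + y ^ 2 = 1 -> y < 0 ->
  exists th, 0 < th < 180 /\ x = - cos (deg th) /\ y = - sin (deg th).
Proof.
  intros H1 H2.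
  assert (Hb : -1 < - x < 1) by nra.
  have Hph := acos_bound_lt (- x) Hb.
  have PIpos := PI_RGT_0.
  exists (acos (- x) * 180 / PI).
  assert (Hd : deg (acos (- x) * 180 / PI) = acos (- x)) by (unfold deg; field; lra).
  rewrite Hd; split; [split|split].
  - apply Rdiv_lt_0_compat; lra.
  - apply (Rmult_lt_reg_r PI); [lra|]. unfold Rdiv; rewrite Rmult_assoc Rinv_l; lra.
  - rewrite cos_acos; lra.
  - rewrite sin_acos; [|lra].
    replace (1 - (- x)²) with (Rsqr y) by (unfold Rsqr; nra).
    rewrite sqrt_Rsqr_abs Rabs_left; lra.
Qed.

Lemma small_t (X : finType) (p q : X -> R) : (forall a, 0 < p a) ->
  exists t, 0 < t /\ forall a, 0 < p a + t * q a.
Proof.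
  intro Hp.
  assert (forall l : seq X, exists t, 0 < t /\ forall a, a \in l -> 0 < p a + t * q a).
  { elim=> [|b l [t0 [Ht0 IH]]].
    - exists 1; split; [lra|]; intros a H; discriminate H.
    - assert (Hq : 0 < Rabs (q b) + 1) by (have := Rabs_pos (q b); lra).
      set (t := Rmin t0 (p b / (Rabs (q b) + 1))).
      have Hpb := Hp b.
      assert (Ht1 : 0 < p b / (Rabs (q b) + 1)) by (apply Rdiv_lt_0_compat; lra).
      assert (Htp : 0 < t) by (unfold t; apply Rmin_glb_lt; lra).
      assert (Hle0 : t <= t0) by apply Rmin_l.
      assert (Hle1 : t <= p b / (Rabs (q b) + 1)) by apply Rmin_r.
      exists t; split; [exact Htp|]; intros a Ha.
      rewrite in_cons in Ha; case/orP: Ha => Ha.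
      + move/eqP: Ha => ->.
        assert (t * (Rabs (q b) + 1) <= p b).
        { apply (Rmult_le_compat_r (Rabs (q b) + 1)) in Hle1; [|lra].
          unfold Rdiv in Hle1; rewrite Rmult_assoc Rinv_l in Hle1; lra. }
        have := Rabs_pos (q b).
        destruct (Rle_dec 0 (q b)) as [h|h].
        * nra.
        * rewrite Rabs_left in H; nra.
      + have := IH a Ha; have := Hp a.
        destruct (Rle_dec 0 (q a)) as [h|h]; nra. }
  destruct (H (enum X)) as [t [Ht Hall]].
  exists t; split; [exact Ht|]; intro a; apply Hall; rewrite mem_enum; reflexivity.
Qed.


Definition lin (c2 c1 c0 v : vec3) := V3 (dot c2 v) (- dot c1 v) (dot c0 v).

Lemma det_lin c2 c1 c0 v1 v2 v3 :
  det3 (lin c2 c1 c0 v1) (lin c2 c1 c0 v2) (lin c2 c1 c0 v3) =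
  det3 c2 (scal (-1) c1) c0 * det3 v1 v2 v3.
Proof. destruct c2, c1, c0, v1, v2, v3; unfold lin, det3, dot, scal; simpl; ring. Qed.

Lemma det_scal k1 k2 k3 u1 u2 u3 :
  det3 (scal k1 u1) (scal k2 u2) (scal k3 u3) = k1 * k2 * k3 * det3 u1 u2 u3.
Proof. destruct u1, u2, u3; unfold det3, scal; simpl; ring. Qed.

Lemma detM_val c1 u t :
  det3 (cross u c1) (scal (-1) c1) (addv c1 (scal t u)) = t * dot (cross u c1) (cross u c1).
Proof. destruct c1, u; unfold det3, dot, scal, cross, addv; simpl; ring. Qed.

Lemma lagrange u c : dot (cross u c) (cross u c) = dot u u * dot c c - (dot u c) ^ 2.
Proof. destruct u, c; unfold dot, cross; simpl; ring. Qed.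

Lemma polar_det P Q R a b c :
  vx P = - cos a -> vy P = - sin a -> vx Q = - cos b -> vy Q = - sin b ->
  vx R = - cos c -> vy R = - sin c ->
  det3 P Q R = vz P * sin (c - b) - vz Q * sin (c - a) + vz R * sin (b - a).
Proof.
  intros; rewrite !sin_minus; unfold det3.
  rewrite H H0 H1 H2 H3 H4; ring.
Qed.


Theorem lemmal (X : finType) (chi : option X -> option X -> option X -> Z)
  (Hval : forall e f g, chi e f g = 0%Z \/ chi e f g = 1%Z \/ chi e f g = (-1)%Z)
  (Hrank : exists a b c, chi a b c <> 0%Z)
  (Hacyc : acyclic chi)
  (Hcol : ~ coloop chi None)
  (Hpar : forall f, f <> None -> ~ parallel chi None f /\ ~ antiparallel chi None f)
  (A B : option X -> Z)
  (HA : pos_cocircuit chi A) (HB : pos_cocircuit chi B) (HAB : A <> B)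
  (HAw : A None = 0%Z) (HBw : B None = 0%Z)
  (Hchi : forall a b, A a <> 0%Z -> B a = 0%Z -> B b <> 0%Z -> A b = 0%Z ->
            chi None a b = 1%Z)
  (Hreal : exists v, realizes chi v) :
  exists (v : option X -> vec3) (theta : X -> R),
    realizes chi v /\
    v None = V3 0 0 1 /\
    (forall a, (vx (v (Some a)) ^ 2 + vy (v (Some a)) ^ 2 = 1)%R) /\
    (forall a, (0 < theta a < 180)%R /\
               vx (v (Some a)) = (- cos (deg (theta a)))%R /\
               vy (v (Some a)) = (- sin (deg (theta a)))%R) /\
    (forall a, (0 < vz (v (Some a)))%R) /\
    (forall a b c, (theta a < theta b < theta c)%R ->
       let r := fun x => vz (v (Some x)) in
       let S := (r a * sin (deg (theta c - theta b))
               - r b * sin (deg (theta c - theta a))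
               + r c * sin (deg (theta b - theta a)))%R in
       (chi (Some a) (Some b) (Some c) = 0%Z -> S = 0%R) /\
       (chi (Some a) (Some b) (Some c) = 1%Z -> (S > 0)%R) /\
       (chi (Some a) (Some b) (Some c) = (-1)%Z -> (S < 0)%R)) /\
    (forall a p q, on_line (v (Some a)) p q <->
       (p * cos (deg (theta a)) + q * sin (deg (theta a)) = vz (v (Some a)))%R).
Proof.
  destruct Hreal as [v Hr].
  destruct (@c1_pos X chi v A B Hr Hrank Hacyc Hpar HA HB HAB HAw HBw) as [c1 [Hc1w Hc1a]].
  set (u := v None) in *.
  have Hu : 0 < dot u u by exact (no_loop (e:=None) Hr Hacyc).
  destruct (small_t X (fun a => dot c1 (v (Some a))) (fun a => dot u (v (Some a))) Hc1a)
    as [t [Ht Hta]].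
  assert (Ha0 : exists a0 : X, True).
  { destruct Hrank as [[a|] [[b|] [[c|] Hne]]]; try (exists a; exact I); try (exists b; exact I);
      try (exists c; exact I).
    exfalso; apply Hne; rewrite Hr; apply sgnR_0; fold u; unfold det3; ring. }
  destruct Ha0 as [a0 _].
  assert (Hc1n : 0 < dot c1 c1).
  { destruct (nz_dec c1) as [h|h]; [exact h|].
    have := Hc1a a0; rewrite h; unfold dot; simpl; lra. }
  set (c0 := addv c1 (scal t u)).
  set (c2 := cross u c1).
  set (detM := det3 c2 (scal (-1) c1) c0).
  assert (HdM : 0 < detM).
  { unfold detM, c2, c0; rewrite detM_val lagrange.
    rewrite (dot_sym u c1) Hc1w. apply Rmult_lt_0_compat; [lra|]. have := Rmult_lt_0_compat _ _ Hu Hc1n; intro H; fold u in H; simpl; rewrite Rmult_0_l Rminus_0_r; exact H. }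
  set (Xa := fun a : X => dot c2 (v (Some a))).
  set (Ya := fun a : X => - dot c1 (v (Some a))).
  set (rho := fun a : X => sqrt (Xa a ^ 2 + Ya a ^ 2)).
  assert (Hrho2 : forall a, 0 < Xa a ^ 2 + Ya a ^ 2).
  { intro a; have := Hc1a a; unfold Ya; nra. }
  assert (Hrho : forall a, 0 < rho a) by (intro a; apply sqrt_lt_R0; apply Hrho2).
  assert (Hrr : forall a, rho a * rho a = Xa a ^ 2 + Ya a ^ 2)
    by (intro a; apply sqrt_sqrt; have := Hrho2 a; lra).
  set (lam := fun e : option X => match e with None => / (t * dot u u) | Some a => / rho a end).
  assert (Hlam : forall e, 0 < lam e).
  { intros [a|]; simpl; apply Rinv_0_lt_compat; [apply Hrho| apply Rmult_lt_0_compat; [lra|exact Hu]]. }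
  set (w := fun e => scal (lam e) (lin c2 c1 c0 (v e))).
  assert (Hwa : forall a, vx (w (Some a)) = Xa a / rho a /\ vy (w (Some a)) = Ya a / rho a /\
                          vz (w (Some a)) = dot c0 (v (Some a)) / rho a).
  { intro a; unfold w, scal, lin, Xa, Ya; simpl; repeat split; unfold Rdiv; ring. }
  assert (Hz : forall a, 0 < dot c0 (v (Some a))).
  { intro a; have := Hta a; unfold c0, dot, addv, scal; simpl; intro h; nra. }
  assert (Hunit : forall a, vx (w (Some a)) ^ 2 + vy (w (Some a)) ^ 2 = 1).
  { intro a; destruct (Hwa a) as [-> [-> _]].
    have := Hrho a; have := Hrr a; intros; field_simplify; [|lra].
    rewrite -Hrr; field; lra. }
  assert (Hneg : forall a, vy (w (Some a)) < 0).
  { intro a; destruct (Hwa a) as [_ [-> _]]; have := Hrho a; have := Hc1a a.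
    unfold Ya; intros; unfold Rdiv; apply Rmult_neg_pos; [lra| apply Rinv_0_lt_compat; lra]. }
  assert (Hth : forall a, exists th, 0 < th < 180 /\ vx (w (Some a)) = - cos (deg th) /\
                                     vy (w (Some a)) = - sin (deg th)).
  { intro a; apply angle; [apply Hunit| apply Hneg]. }
  set (theta := fun a => proj1_sig (constructive_indefinite_description _ (Hth a))).
  assert (Htheta : forall a, 0 < theta a < 180 /\ vx (w (Some a)) = - cos (deg (theta a)) /\
                                     vy (w (Some a)) = - sin (deg (theta a))).
  { intro a; unfold theta; exact (proj2_sig (constructive_indefinite_description _ (Hth a))). }
  assert (Hreal' : realizes chi w).
  { intros e f g; rewrite Hr; unfold w; rewrite det_scal det_lin; fold detM.
    rewrite -Rmult_assoc sgnR_scale; [reflexivity|].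
    have := Hlam e; have := Hlam f; have := Hlam g; intros.
    apply Rmult_lt_0_compat; [|exact HdM].
    apply Rmult_lt_0_compat; [apply Rmult_lt_0_compat|]; assumption. }
  exists w, theta; split; [exact Hreal'|split; [|split; [exact Hunit|split; [exact Htheta|split]]]].
  - unfold w, scal, lin; simpl; f_equal.
    + replace (dot c2 (v None)) with 0 by (unfold c2, u, dot, cross; simpl; ring); ring.
    + rewrite Hc1w; ring.
    + transitivity (/ (t * dot u u) * (dot c1 u + t * dot u u)).
      * unfold c0, dot, addv, scal, u; simpl; ring.
      * rewrite Hc1w. field. split; lra.
  - intro a; destruct (Hwa a) as [_ [_ ->]]; have := Hz a; have := Hrho a; intros.
    unfold Rdiv; apply Rmult_lt_0_compat; [lra| apply Rinv_0_lt_compat; lra].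
  - split.
    + intros a b c _ r S.
      assert (HS : S = det3 (w (Some a)) (w (Some b)) (w (Some c))).
      { destruct (Htheta a) as [_ [xa ya]], (Htheta b) as [_ [xb yb]], (Htheta c) as [_ [xc yc]].
        unfold S, r; rewrite (polar_det _ _ _ _ _ _ xa ya xb yb xc yc).
        unfold deg; replace ((theta c - theta b) * PI / 180) with (theta c * PI / 180 - theta b * PI / 180) by field.
        replace ((theta c - theta a) * PI / 180) with (theta c * PI / 180 - theta a * PI / 180) by field.
        replace ((theta b - theta a) * PI / 180) with (theta b * PI / 180 - theta a * PI / 180) by field.
        reflexivity. }
      rewrite HS Hreal'; split; [|split]; intro h.
      * apply sgnR_eq0; exact h.
      * apply sgnR_eq1; exact h.
      * apply sgnR_eqm1; exact h.
    + intros a p q; destruct (Htheta a) as [_ [xa ya]]; unfold on_line; rewrite xa ya; split; intro; lra.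
Qed.
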